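(* Let $k\ge2$ and $n\le0$ with $\mathcal{F}_{n,k}\not\equiv0$, and write $q=q_{n,k}$, $r=r_{n,k}$. Write $\mathcal{F}_{n,k}(x)=x^rP_{n,k}(x^k)$ with $P_{n,k}(\xi)\in\mathbb{Z}[\xi]$ of degree $N=N_{n,k}$, where $N=q-1$ if $r=0$ and $N=q-r$ if $1\le r\le k-1$. Let $\xi_1,\dots,\xi_N$ be its roots counted with multiplicity, and $\sigma_h$ their $h$-th elementary symmetric polynomial. Then, for $h=1,\dots,N$, $$\sigma_h=\begin{cases}(-1)^hC_k\bigl(-(h+1),\,|n|+1-k(h+1)\bigr),& r=0,\\[4pt] (-1)^{h+r}\,C_k\bigl(-(h+r),\,|n|+1-k(h+r)\bigr)\Big/\binom{q-1}{r-1},& 1\le r\le k-1.\end{cases}$$ Moreover, if $N\ge1$, $$\sum_{j=1}^N\xi_j=\begin{cases}-(2q-3),& r=0,\ k=2,\\ -(q-1),& r=0,\ k\ge3,\\ -\dfrac{(r+1)(q-r)}{r},& 1\le r\le k-1,\end{cases}\qquad \prod_{j=1}^N\xi_j=\begin{cases}(-1)^N,& r=0,\\ (-1)^N\dfrac{q}{r},& 1\le r\le k-1.\end{cases}$$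
   Context: For $k\ge2$, the polynomials $\mathcal{F}_{n,k}(x)\in\mathbb{Z}[x]$ ($n\in\mathbb{Z}$) are defined by $\mathcal{F}_{1,k}=1$, $\mathcal{F}_{n,k}=0$ for $n=0,-1,\dots,-(k-2)$, and $\mathcal{F}_{n,k}(x)=\sum_{j=1}^{k}x^{k-j}\mathcal{F}_{n-j,k}(x)$ for all $n\in\mathbb{Z}$. This recurrence is used upwards for $n\ge2$, and downwards for $n\le-(k-1)$ as $\mathcal{F}_{n,k}=\mathcal{F}_{n+k,k}-\sum_{j=1}^{k-1}x^j\mathcal{F}_{n+j,k}$. For $n\le0$: $q_{n,k}=\lfloor(|n|+1)/k\rfloor$, and $r_{n,k}\in\{0,\dots,k-1\}$ is the residue of $|n|+1$ modulo $k$, so $|n|+1=kq_{n,k}+r_{n,k}$. For integers $m<0$ and $j\ge0$, $C_k(m,j)$ is the coefficient of $x^j$ in the formal power series $1/(1+x+\dots+x^{k-1})^{|m|}$. *)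

(* Defs.v *)
From HB Require Import structures.
From mathcomp Require Import all_boot all_order all_algebra all_field.
Set Implicit Arguments. Unset Strict Implicit. Unset Printing Implicit Defensive.
Import Order.TTheory GRing.Theory Num.Theory.
Local Open Scope ring_scope.

(* Downward part.  down_seq k t = [:: a_0; ...; a_t] with a_t = F_{1-t,k}:
   a_0 = F_1 = 1, a_1 = ... = a_{k-1} = 0 (F_0, ..., F_{-(k-2)}), and for t >= k
   F_n = F_{n+k} - sum_{j=1}^{k-1} x^j F_{n+j}, i.e.
   a_t = a_{t-k} - sum_{j=1}^{k-1} x^j a_{t-j}. *)
Definition next_down (k : nat) (s : seq {poly int}) : {poly int} :=
  let t := size s in
  if (t < k)%N then 0
  else s`_(t - k) - \sum_(1 <= j < k) 'X^j * s`_(t - j).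

Fixpoint down_seq (k t : nat) : seq {poly int} :=
  match t with
  | 0 => [:: 1]
  | t'.+1 => rcons (down_seq k t') (next_down k (down_seq k t'))
  end.

(* Upward part.  up_seq k u = [:: d_0; ...; d_u] with d_u = F_{u-(k-2),k}:
   d_0..d_{k-2} = 0 (F_{-(k-2)}..F_0), d_{k-1} = F_1 = 1, and for u >= k
   d_u = sum_{j=1}^{k} x^{k-j} d_{u-j}. *)
Definition next_up (k : nat) (s : seq {poly int}) : {poly int} :=
  let u := size s in
  if (u < k.-1)%N then 0
  else if u == k.-1 then 1
  else \sum_(1 <= j < k.+1) 'X^(k - j) * s`_(u - j).

Fixpoint up_seq (k u : nat) : seq {poly int} :=
  match u with
  | 0 => [:: next_up k [::]]
  | u'.+1 => rcons (up_seq k u') (next_up k (up_seq k u'))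
  end.

Definition Fnk (k : nat) (n : int) : {poly int} :=
  if n <= 0 then (let t := `|1 - n|%N in (down_seq k t)`_t)
  else (let u := (`|n|%N + k - 2)%N in (up_seq k u)`_u).

Definition qnk (k : nat) (n : int) : nat := ((`|n|%N + 1) %/ k)%N.
Definition rnk (k : nat) (n : int) : nat := ((`|n|%N + 1) %% k)%N.
(* N_{n,k} as an integer (no truncation). *)
Definition Nnk (k : nat) (n : int) : int :=
  if rnk k n == 0%N then (qnk k n)%:Z - 1 else (qnk k n)%:Z - (rnk k n)%:Z.

(* Coefficients of the reciprocal formal power series 1/p of p with p_0 = 1:
   c_0 = 1, c_j = - sum_{i=1}^{j} p_i c_{j-i}  (i.e. p * c = 1). *)
Definition next_inv (p : {poly int}) (s : seq int) : int :=
  let j := size s in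
  if j == 0%N then 1 else - \sum_(1 <= i < j.+1) p`_i * s`_(j - i).

Fixpoint inv_seq (p : {poly int}) (j : nat) : seq int :=
  match j with
  | 0 => [:: next_inv p [::]]
  | j'.+1 => rcons (inv_seq p j') (next_inv p (inv_seq p j'))
  end.

(* C_k(m,j) = [x^j] 1/(1 + x + ... + x^{k-1})^{|m|}  (used for m < 0). *)
Definition Ck (k : nat) (m : int) (j : nat) : int :=
  (inv_seq ((\sum_(i < k) 'X^i) ^+ `|m|%N) j)`_j.

Definition elem_sym (R : comNzRingType) (s : seq R) (h : nat) : R :=
  \sum_(I : {set 'I_(size s)} | #|I| == h) \prod_(i in I) s`_i.

(* Main.v *)
Require Import Defs.
From HB Require Import structures.
From mathcomp Require Import all_boot all_order all_algebra all_field zify ring lra.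
Import Order.TTheory GRing.Theory Num.Theory.
Local Open Scope ring_scope.
Set Implicit Arguments. Unset Strict Implicit. Unset Printing Implicit Defensive.
Implicit Types p : {poly int}.

Lemma size_inv_seq p j : size (inv_seq p j) = j.+1.
Proof. by elim: j => //= j IH; rewrite size_rcons IH. Qed.

Lemma nth_inv_seq p j i : (i <= j)%N -> (inv_seq p j)`_i = (inv_seq p i)`_i.
Proof.
elim: j => [|j IH]; first by rewrite leqn0 => /eqP->.
rewrite leq_eqVlt => /orP[/eqP->//|]; rewrite ltnS => hij /=.
by rewrite nth_rcons size_inv_seq ltnS hij IH.
Qed.

Definition cf (p : {poly int}) j := (inv_seq p j)`_j.

Lemma cf0 p : cf p 0 = 1.
Proof. by []. Qed.

Lemma cfS p j : cf p j.+1 = - \sum_(1 <= i < j.+2) p`_i * cf p (j.+1 - i).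
Proof.
rewrite /cf /= nth_rcons size_inv_seq ltnn eqxx /next_inv size_inv_seq /=.
congr (- _); rewrite !big_nat; apply: eq_bigr => i /andP[i1 i2].
by rewrite nth_inv_seq //; lia.
Qed.

Lemma cf_prop p j : p`_0 = 1 ->
  \sum_(i < j.+1) p`_i * cf p (j - i) = (j == 0%N)%:R.
Proof.
move=> p0; case: j => [|j]; first by rewrite big_ord1 p0 cf0 mulr1.
rewrite -(big_mkord xpredT (fun i => p`_i * cf p (j.+1 - i))).
rewrite big_ltn // p0 mul1r subn0 cfS; by rewrite addNr.
Qed.

Lemma cf_unique p (Q : {poly int}) J : p`_0 = 1 ->
  (forall j, (j < J)%N -> (p * Q)`_j = (j == 0%N)%:R) ->
  forall j, (j < J)%N -> Q`_j = cf p j.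
Proof.
move=> p0 H j; elim: j {-2}j (leqnn j) => [|n IH] j hj hjJ.
  move: hj; rewrite leqn0 => /eqP ->.
  by have := H 0%N (leq_ltn_trans (leq0n _) hjJ); rewrite coefM big_ord1 p0 mul1r.
case: j hj hjJ => [|j] hj hjJ; first by apply: IH.
have := H j.+1 hjJ; rewrite coefM.
rewrite -(big_mkord xpredT (fun i => p`_i * Q`_(j.+1 - i))) big_ltn // p0 mul1r subn0 /=.
move=> E; rewrite cfS.
have -> : Q`_j.+1 = - \sum_(1 <= i < j.+2) p`_i * Q`_(j.+1 - i).
  by apply/eqP; rewrite -subr_eq0 opprK E.
congr (- _); rewrite !big_nat; apply: eq_bigr => i /andP[i1 i2].
rewrite IH //; lia.
Qed.
Definition SS (k : nat) : {poly int} := \sum_(i < k) 'X^i.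

Lemma SS_mul (k : nat) : (1 - 'X) * SS k = 1 - 'X^k.
Proof.
have := subrX1 ('X : {poly int}) k; rewrite /SS => E.
by rewrite -opprB mulNr -E opprB.
Qed.

Lemma comp_polyXnn (a b : {poly int}) m : (a ^+ m) \Po b = (a \Po b) ^+ m.
Proof.
elim: m => [|m IH]; first by rewrite !expr0 -polyC1 comp_polyC.
by rewrite !exprS comp_polyM IH.
Qed.

Lemma coef_1subXn_pow (M m j : nat) : (j < M)%N ->
  ((1 - 'X^M : {poly int}) ^+ m)`_j = (j == 0%N)%:R.
Proof.
move=> hj; elim: m => [|m IH]; first by rewrite expr0 coef1.
by rewrite exprSr mulrBr mulr1 coefB mulrC coefXnM hj subr0 IH.
Qed.

Definition AA (k m J : nat) : {poly int} := (1 - 'X) ^+ m * ((SS J) ^+ m \Po 'X^k).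

Lemma SS_AA (k m J : nat) : (0 < k)%N -> (0 < J)%N ->
  forall j, (j < J)%N -> ((SS k) ^+ m * AA k m J)`_j = (j == 0%N)%:R.
Proof.
move=> k0 J0 j hj.
have -> : (SS k) ^+ m * AA k m J = (1 - 'X^(k * J)) ^+ m.
  rewrite /AA comp_polyXnn mulrA -exprMn [SS k * _]mulrC SS_mul -exprMn.
  congr (_ ^+ m).
  have -> : (1 - 'X^k : {poly int}) = (1 - 'X) \Po 'X^k.
    by rewrite comp_polyB comp_polyX -polyC1 comp_polyC.
  by rewrite -comp_polyM SS_mul comp_polyB -polyC1 comp_polyC comp_Xn_poly -exprM.
apply: coef_1subXn_pow; apply: leq_trans hj _; rewrite leq_pmull //.
Qed.

Lemma SS0 k : (0 < k)%N -> (SS k)`_0 = 1.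
Proof.
move=> k0; rewrite /SS coef_sum (bigD1 (Ordinal k0)) //= coefXn eqxx big1 ?addr0 //.
by move=> i /eqP ne; rewrite coefXn; case: eqP => // h; case: ne; apply: val_inj.
Qed.

Lemma SSn0 k m : (0 < k)%N -> ((SS k) ^+ m)`_0 = 1.
Proof.
move=> k0; elim: m => [|m IH]; first by rewrite expr0 coef1.
by rewrite exprS coef0M IH SS0 // mulr1.
Qed.

Definition cc (k m j : nat) : int := Ck k (- (m%:Z)) j.

Lemma cc_AA k m j J : (0 < k)%N -> (j < J)%N -> cc k m j = (AA k m J)`_j.
Proof.
move=> k0 hj; rewrite /cc /Ck abszN absz_nat /=.
have J0 : (0 < J)%N by apply: leq_ltn_trans hj.
rewrite -/(cf _ j); symmetry; apply: (cf_unique (J := J)) => //; first exact: SSn0.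
exact: SS_AA.
Qed.

Lemma coef_1subX_pow m i : ((1 - 'X : {poly int}) ^+ m)`_i = (-1) ^+ i * ('C(m, i))%:R.
Proof.
elim: m i => [|m IH] i.
  by rewrite expr0 coef1; case: i => [|i]; rewrite ?expr0 ?mul1r // bin0n mulr0.
rewrite exprSr mulrBr mulr1 coefB coefMX IH.
case: i => [|i] /=; first by rewrite !bin0 subr0.
by rewrite IH binS natrD exprS mulrDr; ring.
Qed.

Lemma coef_SS J b : (SS J)`_b = (b < J)%:R.
Proof.
rewrite /SS coef_sum.
case: (ltnP b J) => hb.
  rewrite (bigD1 (Ordinal hb)) //= coefXn eqxx big1 ?addr0 //.
  by move=> i /eqP ne; rewrite coefXn; case: eqP => // h; case: ne; apply: val_inj.
rewrite big1 // => i _; rewrite coefXn; case: eqP => // h.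
by have := ltn_ord i; rewrite -h ltnNge hb.
Qed.

Lemma hockey b m : (\sum_(i < b.+1) 'C(i + m, m) = 'C(b + m.+1, m.+1))%N.
Proof.
elim: b => [|b IH]; first by rewrite big_ord1 add0n binn add0n binn.
rewrite big_ord_recr /= IH.
have -> : (b.+1 + m.+1 = (b + m.+1).+1)%N by rewrite addSn.
by rewrite [in RHS]binS addnS addSn.
Qed.

Lemma coef_SS_pow J m b : (b < J)%N -> ((SS J) ^+ m.+1)`_b = ('C(b + m, m))%:R.
Proof.
elim: m b => [|m IH] b hb; first by rewrite expr1 coef_SS hb bin0.
rewrite exprSr coefM.
have -> : \sum_(i < b.+1) ((SS J) ^+ m.+1)`_i * (SS J)`_(b - i)
   = \sum_(i < b.+1) ('C(i + m, m))%:R.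
  apply: eq_bigr => i _.
  have hi : (i < J)%N by apply: leq_ltn_trans hb; rewrite -ltnS.
  rewrite IH // coef_SS (_ : b - i < J)%N ?mulr1 //.
  by apply: leq_ltn_trans hb; apply: leq_subr.
by rewrite -natr_sum hockey addnS.
Qed.

Lemma onesubX_sum m : (1 - 'X : {poly int}) ^+ m
  = \sum_(i < m.+1) ((-1) ^+ i * ('C(m, i))%:R)%:P * 'X^i.
Proof.
apply/polyP => l; rewrite coef_1subX_pow coef_sum.
case: (ltnP m l) => hl.
  rewrite bin_small // mulr0 big1 // => i _; rewrite coefCM coefXn.
  case: eqP => [e|]; last by rewrite mulr0.
  by have := ltn_ord i; rewrite -e ltnS leqNgt hl.
have hl' : (l < m.+1)%N by [].
rewrite (bigD1 (Ordinal hl')) //= coefCM coefXn eqxx mulr1 big1 ?addr0 //.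
by move=> i /eqP ne; rewrite coefCM coefXn; case: eqP => [h|]; [case: ne; apply: val_inj| rewrite mulr0].
Qed.

Lemma cc_formula k m j : (0 < k)%N ->
  cc k m.+1 j = \sum_(i < m.+2) (-1) ^+ i * ('C(m.+1, i))%:R *
     (if (i <= j)%N && (k %| j - i)%N then ('C((j - i) %/ k + m, m))%:R else 0).
Proof.
move=> k0; rewrite (cc_AA m.+1 (J := j.+1)) // /AA onesubX_sum mulr_suml coef_sum.
apply: eq_bigr => i _; rewrite -[in LHS]mulrA coefCM coefXnM coef_comp_poly_Xn //.
case: (ltnP j i) => hij /=; first by rewrite mulr0.
case: (k %| j - i)%N => //; rewrite coef_SS_pow //.
rewrite ltnS; apply: leq_trans (leq_div _ _) _; apply: leq_subr.
Qed.

Lemma cc0 k j : cc k 0 j = (j == 0%N)%:R.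
Proof.
rewrite /cc /Ck abszN absz_nat expr0 -/(cf _ j) -(coef1 int j); symmetry.
apply: (cf_unique (J := j.+1)) => //; first by rewrite coef1.
by move=> l _; rewrite mul1r coef1.
Qed.

Lemma ccB k m e : (0 < k)%N ->
  cc k m e = \sum_(i < e.+1) (i < k)%:R * cc k m.+1 (e - i).
Proof.
move=> k0.
have E : forall J, (e < J)%N -> ((SS k) * AA k m.+1 J)`_e = cc k m e.
  move=> J hJ; rewrite /cc /Ck abszN absz_nat -/(cf _ e).
  apply: (cf_unique (J := J)) => //; first exact: SSn0.
  move=> l hl; rewrite mulrA -exprSr; apply: SS_AA => //.
  by apply: leq_ltn_trans hJ.
rewrite -(E e.+1) // coefM; apply: eq_bigr => i _.
rewrite coef_SS -cc_AA //; rewrite ltnS; apply: leq_subr.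
Qed.

Lemma size_down_seq k t : size (down_seq k t) = t.+1.
Proof. by elim: t => //= t IH; rewrite size_rcons IH. Qed.

Definition aa k t := (down_seq k t)`_t.

Lemma nth_down_seq k t i : (i <= t)%N -> (down_seq k t)`_i = aa k i.
Proof.
elim: t => [|t IH]; first by rewrite leqn0 => /eqP->.
rewrite leq_eqVlt => /orP[/eqP->//|]; rewrite ltnS => hit /=.
by rewrite nth_rcons size_down_seq ltnS hit IH.
Qed.

Lemma aa0 k : aa k 0 = 1.
Proof. by []. Qed.

Lemma aaS k t : (0 < k)%N -> aa k t.+1 = if (t.+1 < k)%N then 0
   else aa k (t.+1 - k) - \sum_(1 <= j < k) 'X^j * aa k (t.+1 - j).
Proof.
move=> k0; rewrite /aa /= nth_rcons size_down_seq ltnn eqxx /next_down size_down_seq.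
case: ifP => // hk; rewrite nth_down_seq; last by lia.
congr (_ - _); rewrite !big_nat; apply: eq_bigr => i /andP[i1 i2].
by rewrite nth_down_seq //; lia.
Qed.

Definition dd k t e : int :=
  if (e <= t)%N && (k %| t - e)%N then cc k ((t - e) %/ k) e else 0.

Lemma dd_val k t e M : (0 < k)%N -> (e <= t)%N -> (t - e = M * k)%N -> dd k t e = cc k M e.
Proof.
move=> k0 het hM; rewrite /dd het hM dvdn_mull //= mulnK //.
Qed.

Lemma sum_switch (F : nat -> int) e k :
  \sum_(1 <= i < e.+1) (i < k)%:R * F i = \sum_(1 <= j < k) (if (e < j)%N then 0 else F j).
Proof.
rewrite (big_nat_widen _ _ _ _ _ (leq_addr k e.+1)).
rewrite [RHS](big_nat_widen _ _ _ _ _ (leq_addl e.+1 k)) addnC.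
rewrite [LHS]big_mkcond [RHS]big_mkcond /=; apply: eq_bigr => i _.
case: (ltnP i k) => hik; case: (ltnP e i) => hei /=;
  rewrite ltnS; case: ifP => h; rewrite ?mul1r ?mul0r //; lia.
Qed.

Lemma dd_lt k t e : (t < e)%N -> dd k t e = 0.
Proof. by move=> h; rewrite /dd leqNgt h. Qed.

Lemma dd_ndiv k t e : ~~ (k %| t - e)%N -> dd k t e = 0.
Proof. by move=> h; rewrite /dd (negbTE h) andbF. Qed.

Lemma coef_aa k t e : (0 < k)%N -> (aa k t)`_e = dd k t e.
Proof.
move=> k0; elim/ltn_ind: t e => t IH e.
case: t IH => [|t] IH.
  rewrite aa0 coef1 /dd; case: e => [|e] //=.
  by rewrite dvdn0 div0n cc0.
rewrite aaS //; case: ifP => hk.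
  rewrite coef0 /dd; case: ifP => // /andP[het hdv].
  have h0 : (t.+1 - e = 0)%N.
    apply/eqP; apply: contraLR hdv; rewrite -lt0n => hpos.
    apply/negP => /(dvdn_leq hpos); lia.
  by rewrite h0 div0n cc0; have -> : (e == 0%N) = false by lia.
set T := t.+1.
have hkT : (k <= T)%N by move: hk; rewrite /T; case: ltnP.
rewrite coefB coef_sum IH; last by rewrite /T; lia.
have -> : \sum_(1 <= j < k) ('X^j * aa k (T - j))`_e
        = \sum_(1 <= j < k) (if (e < j)%N then 0 else dd k (T - j) (e - j)).
  rewrite !big_nat; apply: eq_bigr => j /andP[j1 j2].
  by rewrite coefXnM IH //; rewrite /T; lia.
case: (ltnP T e) => heT.
  rewrite (@dd_lt k T e heT) (@dd_lt k (T - k) e); last by lia.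
  rewrite big_nat big1 ?subr0 // => j /andP[j1 j2]; case: ifP => // hej.
  by rewrite dd_lt //; lia.
case: (boolP (k %| T - e)%N) => hdv.
  have [M hM] := dvdnP hdv.
  case: M hM => [|M] hM.
    have eT : e = T by lia.
    rewrite (@dd_val k T e 0 k0 heT) ?hM // cc0 (_ : (e == 0%N) = false); last by lia.
    rewrite dd_lt; last by lia.
    rewrite big_nat big1 ?subr0 // => j /andP[j1 j2]; case: ifP => // hej.
    rewrite (@dd_val k (T - j) (e - j) 0 k0) ?cc0; [|lia|lia].
    by rewrite (_ : ((e - j)%N == 0%N) = false) //; lia.
  rewrite (dd_val k0 heT hM) (@dd_val k (T - k) e M k0); [|lia|lia].
  rewrite (ccB M e k0).
  rewrite -(big_mkord xpredT (fun i => (i < k)%:R * cc k M.+1 (e - i))) big_ltn // k0 mul1r subn0.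
  rewrite sum_switch.
  have -> : \sum_(1 <= j < k) (if (e < j)%N then 0 else dd k (T - j) (e - j))
          = \sum_(1 <= j < k) (if (e < j)%N then 0 else cc k M.+1 (e - j)).
    rewrite !big_nat; apply: eq_bigr => j /andP[j1 j2]; case: ifP => // hej.
    by rewrite (@dd_val k (T - j) (e - j) M.+1 k0) //; lia.
  by rewrite addrK.
rewrite (dd_ndiv hdv).
have -> : dd k (T - k) e = 0.
  case: (ltnP (T - k) e) => hh; first exact: dd_lt.
  apply: dd_ndiv; apply/negP => h; move/negP: hdv; apply.
  rewrite (_ : (T - e = (T - k - e) + k)%N); last by lia.
  by rewrite dvdn_addl.
rewrite big_nat big1 ?subr0 // => j /andP[j1 j2]; case: ifP => // hej.
by rewrite dd_ndiv // (_ : (T - j - (e - j) = T - e)%N) //; lia.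
Qed.

Lemma ndiv_lemma k a x : (0 < x)%N -> (x < k)%N -> ~~ (k %| a * k + x)%N.
Proof.
move=> x0 xk; rewrite dvdn_addr ?dvdn_mull //.
by apply/negP => /(dvdn_leq x0); rewrite leqNgt xk.
Qed.

Lemma cc_vanish k m a r : (r < k)%N -> (m < r)%N -> cc k m (a * k + r) = 0.
Proof.
move=> rk mr; case: m mr => [|m] mr.
  by rewrite cc0 (_ : (a * k + r == 0)%N = false) //; lia.
rewrite cc_formula; last by lia.
rewrite big1 // => i _.
case: (leqP i m.+1) => him; last by rewrite bin_small // mulr0 mul0r.
rewrite (_ : (k %| a * k + r - i)%N = false) ?andbF ?mulr0 //.
apply/negbTE; rewrite (_ : (a * k + r - i = a * k + (r - i))%N); last by lia.
apply: ndiv_lemma; lia.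
Qed.

Lemma cc_single k m a r : (0 < k)%N -> (r < k)%N -> (r <= m.+1)%N ->
  (m.+1 < r + k)%N || (a == 0%N) ->
  cc k m.+1 (a * k + r) = (-1) ^+ r * ('C(m.+1, r))%:R * ('C(a + m, m))%:R.
Proof.
move=> k0 rk rm hyp; rewrite cc_formula //.
have hr : (r < m.+2)%N by lia.
rewrite (bigD1 (Ordinal hr)) //= big1 ?addr0.
  rewrite (_ : (r <= a * k + r)%N) ?addnK ?dvdn_mull //=; last by lia.
  by rewrite mulnK.
move=> i /eqP ne.
have ne' : (nat_of_ord i != r) by apply/eqP => h; apply: ne; apply: val_inj.
case: (leqP i (a * k + r)) => hij /=; last by rewrite mulr0.
case: (ltnP i r) => hir.
  rewrite (_ : (a * k + r - i = a * k + (r - i))%N); last by lia.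
  by rewrite (negbTE (ndiv_lemma _ _ _)) ?mulr0 //; lia.
have hir' : (r < i)%N by rewrite ltn_neqAle eq_sym ne' hir.
case/orP: hyp => hyp.
  rewrite (_ : (k %| a * k + r - i)%N = false) ?mulr0 //.
  apply/negP => hd.
  have : (k %| (a * k + r - i) + (i - r))%N.
    by rewrite (_ : ((a * k + r - i) + (i - r) = a * k)%N) ?dvdn_mull //; lia.
  rewrite dvdn_addr // => /(dvdn_leq _); have := ltn_ord i; lia.
move/eqP: hyp => a0; subst a; lia.
Qed.

Lemma cc_k2 a : cc 2 2 (a * 2) = (2 * a + 1)%:R.
Proof.
rewrite cc_formula // !big_ord_recr big_ord0 /= add0r.
rewrite (_ : 'C(2,0) = 1%N) // (_ : 'C(2,1) = 2%N) // (_ : 'C(2,2) = 1%N) //.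
rewrite expr0 !mul1r subn0 dvdn_mull // mulnK // addn1 bin1.
case: a => [|a] /=; first by rewrite !mulr0 !addr0.
rewrite (_ : (2 %| a.+1 * 2 - 1)%N = false) ?andbF ?mulr0 ?addr0; last first.
  rewrite (_ : (a.+1 * 2 - 1 = a * 2 + 1)%N); last by lia.
  by apply/negbTE; apply: ndiv_lemma.
rewrite (_ : (a.+1 * 2 - 2 = a * 2)%N) ?dvdn_mull // ?mulnK //; last by lia.
rewrite addn1 bin1 -natrD; congr (_%:R); lia.
Qed.

Lemma Fnk_aa k n : n <= 0 -> Fnk k n = aa k (`|n|%N + 1).
Proof.
move=> hn; rewrite /Fnk hn /aa; congr (nth _ (down_seq k _) _); lia.
Qed.

Lemma P_coef k n P b : (0 < k)%N -> n <= 0 ->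
  Fnk k n = 'X^(rnk k n) * (P \Po 'X^k) ->
  P`_b = dd k (`|n|%N + 1) (b * k + rnk k n).
Proof.
move=> k0 hn H; rewrite -coef_aa // -Fnk_aa // H coefXnM.
rewrite (_ : (b * k + rnk k n < rnk k n)%N = false); last by lia.
by rewrite addnK coef_comp_poly_Xn // dvdn_mull // mulnK.
Qed.

Lemma dd_P k T q r b : (0 < k)%N -> T = (q * k + r)%N ->
  dd k T (b * k + r) = if (b <= q)%N then cc k (q - b) (b * k + r) else 0.
Proof.
move=> k0 hT; case: (leqP b q) => hb.
  apply: dd_val => //; first by rewrite hT; nia.
  by rewrite hT mulnBl; lia.
apply: dd_lt; rewrite hT; nia.
Qed.

Unset Implicit Arguments.

Theorem mainTheorem18 (k : nat) (n : int) :
  (2 <= k)%N -> n <= 0 -> Fnk k n != 0 ->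
  let q := qnk k n in let r := rnk k n in let N := Nnk k n in
  (exists P : {poly int}, Fnk k n = 'X^r * (P \Po 'X^k)) /\
  forall P : {poly int}, Fnk k n = 'X^r * (P \Po 'X^k) ->
    (size P)%:Z = N + 1 /\
    forall xs : seq algC,
      map_poly (fun z : int => z%:~R) P
        = lead_coef (map_poly (fun z : int => z%:~R) P) *: \prod_(z <- xs) ('X - z%:P) ->
      (forall h : nat, (1 <= h)%N -> h%:Z <= N ->
         elem_sym xs h =
           (if r == 0%N then
              (-1) ^+ h * (Ck k (- (h.+1)%:Z) (`|n|%N + 1 - k * h.+1)%N)%:~R
            else
              (-1) ^+ (h + r) * (Ck k (- (h + r)%:Z) (`|n|%N + 1 - k * (h + r))%N)%:~R
                / ('C(q - 1, r - 1))%:R)) /\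
      (1 <= N ->
         \sum_(x <- xs) x =
           (if r == 0%N then
              (if k == 2%N then - ((2 * q%:Z - 3)%:~R) else - ((q%:Z - 1)%:~R))
            else - (((r%:Z + 1) * (q%:Z - r%:Z))%:~R / r%:R))
         /\
         \prod_(x <- xs) x =
           (if r == 0%N then (-1) ^ N
            else (-1) ^ N * q%:R / r%:R)).
Proof.
move=> k2 hn F0 q r N.
have k0 : (0 < k)%N by lia.
have hT : (`|n|%N + 1 = q * k + r)%N by rewrite /q /r /qnk /rnk; exact: divn_eq.
have hr : (r < k)%N by rewrite /r /rnk ltn_pmod.
have hrE : rnk k n = r by [].
have HN : N = if r == 0%N then q%:Z - 1 else q%:Z - r%:Z by [].
clearbody q r N.
set T := (`|n|%N + 1)%N.
have T1 : (1 <= T)%N by rewrite /T; lia.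
have Pb : forall P, Fnk k n = 'X^r * (P \Po 'X^k) ->
    forall b, P`_b = if (b <= q)%N then cc k (q - b) (b * k + r) else 0.
  move=> P HP b; rewrite -hrE in HP; rewrite (P_coef b k0 hn HP) hrE.
  exact: dd_P.
pose P0 : {poly int} := \poly_(b < q.+1) cc k (q - b) (b * k + r).
have HP0 : Fnk k n = 'X^r * (P0 \Po 'X^k).
  apply/polyP => e; rewrite Fnk_aa // coef_aa // coefXnM coef_comp_poly_Xn //.
  case: (ltnP e r) => her.
    apply: dd_ndiv; rewrite hT (_ : (q * k + r - e = q * k + (r - e))%N); last by lia.
    apply: ndiv_lemma; lia.
  case: (boolP (k %| e - r)%N) => hd.
    have [b hb] := dvdnP hd.
    have -> : e = (b * k + r)%N by lia.
    rewrite addnK mulnK // coef_poly ltnS (dd_P b k0 hT) //.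
  case: (ltnP T e) => heT; first exact: dd_lt.
  apply: dd_ndiv; apply/negP => h; move/negP: hd; apply.
  rewrite (_ : (e - r = (T - r) - (T - e))%N); last by lia.
  by apply: dvdn_sub => //; rewrite /T hT addnK dvdn_mull.
have Hvan : forall b, (b <= q)%N -> (q - b < (if r == 0%N then 1 else r))%N ->
    cc k (q - b) (b * k + r) = 0.
  move=> b hb; case: eqP => [r0|rn0] hlt.
    rewrite (_ : (q - b = 0)%N); last by lia.
    by rewrite cc0 (_ : (b * k + r == 0)%N = false) //; nia.
  apply: cc_vanish => //; lia.
pose m0 := if r == 0%N then 1%N else r.
have hq : (m0 <= q)%N.
  rewrite leqNgt; apply/negP => hlt; move/negP: F0; apply.
  rewrite HP0; suff -> : P0 = 0 by rewrite comp_poly0 mulr0.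
  apply/polyP => b; rewrite coef_poly coef0; case: ifP => // hb; apply: Hvan; rewrite /m0 in hlt; lia.
split; first by exists P0.
move=> P HP.
pose N' := (q - m0)%N.
pose lcv : int := if r == 0%N then 1 else (-1) ^+ r * ('C(q - 1, r - 1))%:R.
have lead : P`_N' = lcv.
  rewrite (Pb P HP) (_ : (N' <= q)%N); last by lia.
  rewrite (_ : (q - N' = m0)%N); last by lia.
  rewrite /m0 /lcv; case: eqP => [r0|rn0].
    rewrite r0 (@cc_single k 0 N' 0) //; last by lia.
    by rewrite expr0 bin0 mul1r addn0 bin0.
  have [r' er] : exists r', r = r'.+1 by exists r.-1; lia.
  rewrite er (@cc_single k r' N' r'.+1) //; try lia.
  rewrite binn mulr1; congr (_ * ('C(_, _))%:R); rewrite /N'; move: hq;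
    rewrite /m0 er /=; lia.
have lcv0 : lcv != 0.
  rewrite /lcv; case: ifP => // rn0.
  apply: mulf_neq0; first by rewrite signr_eq0.
  rewrite pnatr_eq0 -lt0n bin_gt0; move: hq; rewrite /m0; case: eqP => //; lia.
have high : forall b, (N' < b)%N -> P`_b = 0.
  move=> b hb; rewrite (Pb P HP); case: ifP => // hbq; apply: Hvan; rewrite /N' /m0 in hb; lia.
have sizeP : size P = N'.+1.
  apply/eqP; rewrite eqn_leq; apply/andP; split.
    by apply/leq_sizeP => j hj; apply: high.
  case: ltnP => // hs; move: lcv0; rewrite -lead nth_default //.
split.
  rewrite sizeP HN /N'; move: hq; rewrite /m0; case: ifP => _ hq; lia.
move=> xs Hxs.
have coefPc : forall i, (map_poly (fun z : int => z%:~R : algC) P)`_i = (P`_i)%:~R.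
  by move=> i; rewrite coef_map_id0.
have sizePc : size (map_poly (fun z : int => z%:~R : algC) P) = N'.+1.
  by rewrite size_map_inj_poly ?sizeP // => x y /intr_inj.
have lcE : lead_coef (map_poly (fun z : int => z%:~R : algC) P) = lcv%:~R.
  by rewrite lead_coefE sizePc coefPc lead.
rewrite lcE in Hxs.
have lcC0 : (lcv%:~R : algC) != 0 by rewrite intr_eq0.
have sxs : size xs = N'.
  have := congr1 (fun p : {poly algC} => size p) Hxs; rewrite size_scale // size_prod_XsubC sizePc; case.
  by [].
have Hc : forall i, (\prod_(z <- xs) ('X - z%:P))`_i = (P`_i)%:~R / lcv%:~R.
  by move=> i; rewrite -coefPc Hxs coefZ mulrAC mulfV // mul1r.
have sgK : forall m, ((-1) ^+ m * (-1) ^+ m : algC) = 1.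
  by move=> m; rewrite -exprD addnn -mul2n exprM expr2 mulN1r opprK expr1n.
have HN' : N = N'%:Z.
  by rewrite HN /N'; move: hq; rewrite /m0; case: ifP => _ hq; lia.
split.
  move=> h h1 hNh.
  have hh : (h <= N')%N by move: hNh; rewrite HN'; lia.
  have hle : (N' - h <= size xs)%N by rewrite sxs leq_subr.
  have E := coef_prod_XsubC hle.
  rewrite (_ : (size xs - (N' - h))%N = h) in E; last by rewrite sxs; lia.
  have ES : elem_sym xs h = (-1) ^+ h * ((P`_(N' - h))%:~R / lcv%:~R).
    by rewrite -Hc E mulrA sgK mul1r.
  rewrite ES.
  have PNh : P`_(N' - h) = cc k (m0 + h) ((N' - h) * k + r).
    rewrite (Pb P HP) (_ : (N' - h <= q)%N); last by rewrite /N'; lia.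
    by rewrite (_ : (q - (N' - h) = m0 + h)%N) //; move: hh; rewrite /N'; lia.
  move: PNh hh; rewrite /lcv /N' /m0 /T; case: ifP => hr0 PNh hh; rewrite PNh.
    move/eqP: hr0 => r0.
    rewrite (_ : (1 : int)%:~R = 1 :> algC) // divr1 /cc.
    congr (_ * (Ck k _ _)%:~R).
    rewrite hT r0; nia.
  rewrite intrM intr_sign rmorph_nat invfM invr_sign.
  have -> : cc k (r + h) ((q - r - h) * k + r) = Ck k (- (h + r)%:Z) (`|n| + 1 - k * (h + r)).
    rewrite /cc addnC; congr (Ck k _ _); rewrite hT; nia.
  rewrite exprD; ring.
move=> hN1.
have hN'1 : (1 <= N')%N by move: hN1; rewrite HN'; lia.
have hs0 : size xs != 0%N by rewrite sxs -lt0n.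
have E1 := coefPn_prod_XsubC hs0.
rewrite sxs Hc in E1.
have E0 := coef0_prod_XsubC xs.
rewrite Hc sxs in E0.
have S1 : \sum_(x <- xs) x = - ((P`_N'.-1)%:~R / lcv%:~R) by rewrite E1 opprK.
have Pr : \prod_(x <- xs) x = (-1) ^+ N' * ((P`_0)%:~R / lcv%:~R)
  by rewrite E0 mulrA sgK mul1r.
have PN1 : P`_N'.-1 = cc k (m0 + 1) (N'.-1 * k + r).
  rewrite (Pb P HP) (_ : (N'.-1 <= q)%N); last by rewrite /N'; lia.
  by rewrite (_ : (q - N'.-1 = m0 + 1)%N) //; move: hN'1; rewrite /N'; lia.
have qS : q = q.-1.+1 by move: hq; rewrite /m0; case: ifP => _; lia.
have P00 : P`_0 = (-1) ^+ r * ('C(q, r))%:R.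
  rewrite (Pb P HP) leq0n subn0 -(mul0n k) {1}qS cc_single //; last by rewrite eqxx orbT.
    by rewrite -qS add0n binn mulr1.
  by move: hq; rewrite /m0; case: ifP => /eqP h0; lia.
rewrite S1 Pr HN' -exprnP PN1 P00.
clear hrE.
move: hN'1 hq; rewrite /lcv /N' /m0; case: ifP => hr0 hN'1 hq.
  move/eqP: hr0 => r0; subst r.
  rewrite (_ : (1 : int)%:~R = 1 :> algC) // !divr1 expr0 bin0 mul1r /= mulr1.
  split => //.
  case: eqP => hk2.
    subst k; rewrite (_ : ((q - 1).-1 * 2 + 0 = (q - 2) * 2)%N); last by lia.
    rewrite cc_k2; congr (- _%:~R); lia.
  rewrite (_ : (1 + 1 = 1.+1)%N) // cc_single //; last by apply/orP; left; lia.
  rewrite expr0 bin0 !mul1r; congr (- _%:~R); rewrite bin1; lia.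
have [r' er] : exists r', r = r'.+1 by exists r.-1; move/negbT: hr0; lia.
subst r; rewrite subSS subn0.
have r0 : (r'.+1%:R : algC) != 0 by rewrite pnatr_eq0.
have C00 : ('C(q - 1, r')%:R : algC) != 0 by rewrite pnatr_eq0 -lt0n bin_gt0; lia.
have s0 : ((-1) ^+ r'.+1 : algC) != 0 by rewrite signr_eq0.
split.
  rewrite (_ : (r'.+1 + 1 = r'.+1.+1)%N); last by rewrite addn1.
  rewrite cc_single //; last by apply/orP; left; lia.
  rewrite binSn.
  have C1E : ('C((q - r'.+1).-1 + r'.+1, r'.+1)%:R : algC)
      = (q - r'.+1)%:R * ('C(q - 1, r'))%:R / r'.+1%:R.
    rewrite (_ : ((q - r'.+1).-1 + r'.+1 = q - 1)%N); last by lia.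
    have := mul_bin_left (q - 1) r'.
    move/(congr1 (fun x => x%:R : algC)); rewrite !natrM => h.
    rewrite (_ : (q - r'.+1 = q - 1 - r')%N); last by lia.
    by rewrite -h mulrAC divff ?mul1r.
  rewrite !intrM !intr_sign !rmorph_nat C1E.
  rewrite (_ : (r'.+1%:Z + 1) = (r'.+2)%N :> int); last by lia.
  rewrite (_ : (q%:Z - r'.+1%:Z) = (q - r'.+1)%N :> int); last by lia.
  rewrite -!pmulrn.
  move: s0 C00 r0.
  set s := ((-1) ^+ r'.+1 : algC); set c := ('C(q - 1, r')%:R : algC).
  set d := (r'.+1%:R : algC); set a := (r'.+2%:R : algC); set b := ((q - r'.+1)%:R : algC).
  clearbody s c d a b => s0 c0 d0.
  by field; rewrite ?s0 ?c0 ?d0.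
have CqE : ('C(q, r'.+1)%:R : algC) = q%:R * ('C(q - 1, r'))%:R / r'.+1%:R.
  have := mul_bin_diag q r'.
  move/(congr1 (fun x => x%:R : algC)); rewrite !natrM subn1 => h.
  by rewrite h mulrAC divff ?mul1r.
rewrite !intrM !intr_sign !rmorph_nat CqE.
move: s0 C00 r0.
set s := ((-1) ^+ r'.+1 : algC); set c := ('C(q - 1, r')%:R : algC).
set d := (r'.+1%:R : algC); set a := (q%:R : algC); set b := ((-1) ^+ (q - r'.+1) : algC).
clearbody s c d a b => s0 c0 d0.
by field; rewrite ?s0 ?c0 ?d0.
Qed.
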